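(* Fix $j\in\{1,\ldots,K\}$ and $\Gamma^c_j\in\mathbb{R}$. For every $N\ge 1$, the circulation of $\psi^*_{N,j}$ around $L_j$ equals $\Gamma^c_j\frac{2K-1}{K}$, and its circulation around $L_k$ equals $-\Gamma^c_j/K$ for every $k\ne j$.
   Context: Let $K\ge 2$. Let $L_k=\{z:|z-c_k|=R_k\}$, $k=1,\dots,K$, be circles in $\mathbb{C}$ with pairwise disjoint closed disks, $\operatorname{int}L_k$ the open disk, and $T_k(z)=c_k+\frac{R_k^2}{\bar z-\bar c_k}$ the inversion in $L_k$, with $T_k(c_k)=\infty$, $T_k(\infty)=c_k$. For $M\ge0$, the level-$M$ points of $c_j$ are the multiset $T_{i_1}\circ\cdots\circ T_{i_M}(c_j)$ over words $(i_1,\ldots,i_M)\in\{1,\ldots,K\}^M$ with $i_k\ne i_{k+1}$ (level 0 is $c_j$; the level-1 point $T_j(c_j)=\infty$ is one of them). Define $\psi_{N,j}(z)=-\frac{\Gamma^c_j}{2\pi}\sum_{M=0}^{N}(-1)^M\sum_{\zeta\in\text{level }M,\ \zeta\ne\infty}\log|z-\zeta|$ (the term for $\zeta=\infty$ is omitted) and $\psi^*_{N,j}=\frac{(K-1)\psi_{N,j}+\psi_{N+1,j}}{K}$. Circulation: for a finite sum $\psi(z)=-\frac{1}{2\pi}\sum_k\Gamma_k\log|z-\zeta_k|$ with no $\zeta_k$ on $L$, the circulation around a circle $L$ is the sum of $\Gamma_k$ over $\zeta_k$ inside $L$ (equivalently $-\oint_{L}\partial\psi/\partial n\,ds$, counterclockwise,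 outward normal). *)

(* Defs.v *)
(* Points of C are encoded as pairs (x,y) over an arbitrary
   real field R; the point at infinity is encoded by [None] in [option]. *)
From HB Require Import structures.
From mathcomp Require Import all_boot all_order all_algebra.
Set Implicit Arguments. Unset Strict Implicit. Unset Printing Implicit Defensive.
Import Order.TTheory GRing.Theory Num.Theory.
Local Open Scope ring_scope.

Section Defs.
Variable R : realFieldType.

Definition pt := (R * R)%type.

Definition psub (z w : pt) : pt := (z.1 - w.1, z.2 - w.2).

Definition sqn (z : pt) : R := z.1 ^+ 2 + z.2 ^+ 2.

(* inversion T(z) = c + rad^2 / conj(z - c) = c + rad^2 (z - c) / |z - c|^2, z <> c *)
Definition inv_pt (c : pt) (rad : R) (z : pt) : pt :=
  let w := psub z c in
  (c.1 + rad ^+ 2 * w.1 / sqn w, c.2 + rad ^+ 2 * w.2 / sqn w).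

Definition inv_ext (c : pt) (rad : R) (p : option pt) : option pt :=
  match p with
  | None => Some c
  | Some z => if z == c then None else Some (inv_pt c rad z)
  end.

Variable K : nat.
Variable c : 'I_K -> pt.
Variable rad : 'I_K -> R.

Definition word_ok (w : seq 'I_K) : bool := sorted (fun a b => a != b) w.

Definition level_point (j : 'I_K) (w : seq 'I_K) : option pt :=
  foldr (fun i p => inv_ext (c i) (rad i) p) (Some (c j)) w.

(* the multiset of finite level-M points of c_j (the point oo is dropped) *)
Definition level_pts (j : 'I_K) (M : nat) : seq pt :=
  pmap (fun t : M.-tuple 'I_K =>
          if word_ok t then level_point j t else None)
       (enum {: M.-tuple 'I_K}).

(* A finite point-vortex stream function
   psi(z) = -(1/2pi) sum_k Gamma_k log|z - zeta_k|
   is represented by its list of (zeta_k, Gamma_k). *)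
Definition vortices := seq (pt * R).

Definition scale_v (a : R) (s : vortices) : vortices :=
  [seq (p.1, a * p.2) | p <- s].

Definition psiN (j : 'I_K) (Gam : R) (N : nat) : vortices :=
  flatten [seq [seq (z, Gam * (-1) ^+ M) | z <- level_pts j M] | M <- iota 0 N.+1].

Definition psiStar (j : 'I_K) (Gam : R) (N : nat) : vortices :=
  scale_v ((K.-1)%:R / K%:R) (psiN j Gam N) ++ scale_v (K%:R)^-1 (psiN j Gam N.+1).

End Defs.

Definition circulation (R : realFieldType) (c0 : pt R) (r0 : R) (s : vortices R) : R :=
  \sum_(p <- s | sqn (psub p.1 c0) < r0 ^+ 2) p.2.

(* Main.v *)
Require Import Defs.
From HB Require Import structures.
From mathcomp Require Import all_boot all_order all_algebra.
From mathcomp Require Import ring lra.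
Set Implicit Arguments. Unset Strict Implicit. Unset Printing Implicit Defensive.
Import Order.TTheory GRing.Theory Num.Theory.
Local Open Scope ring_scope.

Lemma sqn_ge0 (R : realFieldType) (z : pt R) : 0 <= sqn z.
Proof. rewrite /sqn; apply: addr_ge0; apply: sqr_ge0. Qed.

Lemma inv_inside (R : realFieldType) (c0 z : pt R) (r : R) :
  0 < r -> r ^+ 2 < sqn (psub z c0) ->
  sqn (psub (inv_pt c0 r z) c0) < r ^+ 2.
Proof.
move=> hr hs.
have s0 : 0 < sqn (psub z c0) by apply: lt_trans hs; rewrite exprn_gt0.
set s := sqn (psub z c0) in hs s0 *.
have -> : sqn (psub (inv_pt c0 r z) c0) = r ^+ 4 / s.
  rewrite /inv_pt /psub /sqn /= -/(psub z c0).
  rewrite /s /sqn /psub /=. field. by move: s0; rewrite /s /sqn /psub /= => /lt0r_neq0.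
rewrite ltr_pdivrMr // (_ : r ^+ 4 = r ^+ 2 * r ^+ 2); last by rewrite -exprD.
by rewrite ltr_pM2l // exprn_gt0.
Qed.
Lemma sum_tuple_cons (R : realFieldType) (K M : nat) (F : seq 'I_K -> R) :
  \sum_(t : M.+1.-tuple 'I_K) F t = \sum_(i : 'I_K) \sum_(t : M.-tuple 'I_K) F (i :: t).
Proof.
rewrite pair_big /=.
rewrite (reindex (fun p : 'I_K * M.-tuple 'I_K => cons_tuple p.1 p.2)) /=.
  by [].
exists (fun t : M.+1.-tuple 'I_K => (thead t, behead_tuple t)) => [[i t] _|t _] /=.
  by congr pair; apply: val_inj.
by apply: val_inj; case: t => [[|x s] //].
Qed.

Lemma sum_pmap (R : realFieldType) (T U : Type) (f : T -> option U) (s : seq T)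
   (P : pred U) (x : R) :
  \sum_(z <- pmap f s | P z) x = x * \sum_(y <- s) oapp (fun z => if P z then 1 else 0) 0 (f y).
Proof.
elim: s => [|y s IH] /=; first by rewrite !big_nil mulr0.
case E: (f y) => [u|] /=; rewrite !big_cons /= E /= IH.
  by case: (P u); rewrite mulrDr ?mulr1 ?mulr0 ?add0r.
by rewrite add0r.
Qed.

Lemma sum_enum_tuple (R : realFieldType) (K M : nat) (F : M.-tuple 'I_K -> R) :
  \sum_(t <- enum {: M.-tuple 'I_K}) F t = \sum_(t : M.-tuple 'I_K) F t.
Proof. by rewrite enumT. Qed.

Lemma sum_ind (R : realFieldType) (K : nat) (k : 'I_K) :
  \sum_(i : 'I_K) ((k != i)%:R : R) = (K.-1)%:R.
Proof.
rewrite (_ : \sum_(i : 'I_K) ((k != i)%:R : R) = \sum_(i | k != i) 1); last first.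
  by rewrite [RHS]big_mkcond /=; apply: eq_bigr => i _; case: (k != i).
rewrite sumr_const.
congr (_%:R).
have -> : #|(fun i : 'I_K => k != i)| = #|predC1 k|.
  by apply: eq_card => i; rewrite !inE eq_sym.
by rewrite cardC1 card_ord.
Qed.

Lemma circ_cat (R : realFieldType) (c0 : pt R) r0 (s1 s2 : vortices R) :
  circulation c0 r0 (s1 ++ s2) = circulation c0 r0 s1 + circulation c0 r0 s2.
Proof. by rewrite /circulation big_cat. Qed.

Lemma circ_scale (R : realFieldType) (c0 : pt R) r0 a (s : vortices R) :
  circulation c0 r0 (scale_v a s) = a * circulation c0 r0 s.
Proof. by rewrite /circulation big_map /= mulr_sumr. Qed.

Section Geo.
Variables (R : realFieldType) (K : nat) (c : 'I_K -> pt R) (rad : 'I_K -> R).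
Hypothesis hrad : forall k, 0 < rad k.
Hypothesis hdisj : forall i k : 'I_K, i != k -> forall z : pt R,
      ~ (sqn (psub z (c i)) <= rad i ^+ 2 /\ sqn (psub z (c k)) <= rad k ^+ 2).

Definition inside (k : 'I_K) (z : pt R) := sqn (psub z (c k)) < rad k ^+ 2.

Lemma outside i k z : i != k -> inside i z -> rad k ^+ 2 < sqn (psub z (c k)).
Proof.
move=> ik hi; rewrite ltNge; apply/negP => hk.
move: hi; rewrite /inside => hi. have hi2 := ltW hi. exact: (hdisj ik (conj hi2 hk)).
Qed.

Lemma inside_uniq i k z : inside i z -> inside k z -> i = k.
Proof.
move=> hi hk; apply/eqP; apply/negPn/negP => ik.
by have := outside ik hi; rewrite ltNge (ltW hk).
Qed.

Lemma center_inside k : inside k (c k).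
Proof. by rewrite /inside /psub /sqn !subrr expr0n /= addr0 exprn_gt0. Qed.

Lemma psub0 (z w : pt R) : sqn (psub z w) < 0 -> False.
Proof. by rewrite ltNge sqn_ge0. Qed.

Lemma inv_step i z : rad i ^+ 2 < sqn (psub z (c i)) ->
  exists z', inv_ext (c i) (rad i) (Some z) = Some z' /\ inside i z'.
Proof.
move=> h; rewrite /inv_ext.
case: eqP => [ez|_].
  by move: h; rewrite ez /psub /sqn !subrr expr0n /= addr0 ltNge (ltW (exprn_gt0 _ (hrad i))).
by eexists; split; [reflexivity| apply: inv_inside].
Qed.

Lemma loc j i w : word_ok (i :: w) -> (i :: w) != [:: j] ->
  exists z, level_point c rad j (i :: w) = Some z /\ inside i z.
Proof.
elim: w i => [|i2 w IH] i /=.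
  move=> _ ij. apply: inv_step. apply: (outside (i:=j)); last exact: center_inside.
  by apply: contraNneq ij => ->.
case/andP=> ii2 ok2 _.
have [e|ne] := eqVneq (i2 :: w) [:: j].
  case: e => -> ->; rewrite /= eqxx /=.
  by exists (c i); split => //; apply: center_inside.
have [z [ez iz]] := IH i2 ok2 ne.
have ez' : inv_ext (c i2) (rad i2) (level_point c rad j w) = Some z := ez.
rewrite ez'.
apply: inv_step; apply: (outside (i:=i2)) => //; by rewrite eq_sym.
Qed.


Lemma sum_tuple0 (x : R) : \sum_(t : 0.-tuple 'I_K) x = x.
Proof. by rewrite sumr_const card_tuple expn0. Qed.

Definition G (j k : 'I_K) (w : seq 'I_K) : R :=
  oapp (fun z => if inside k z then 1 else 0) 0
       (if word_ok w then level_point c rad j w else None).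

Lemma lp_j j : level_point c rad j [:: j] = None.
Proof. by rewrite /level_point /= eqxx. Qed.

Lemma G_cons j k i w :
  G j k (i :: w) = (word_ok (i :: w) && ((i :: w) != [:: j]) && (i == k))%:R.
Proof.
rewrite /G; case ok: (word_ok (i :: w)) => //.
have [e|ne] := eqVneq (i :: w) [:: j].
  by rewrite e lp_j.
have [z [ez iz]] := loc ok ne.
rewrite ez /=.
have [ek|nik] := eqVneq i k; first by subst k; rewrite iz.
case ik: (inside k z) => //.
by move: nik; rewrite (inside_uniq iz ik) eqxx.
Qed.

Lemma cnt_succ j k M :
  \sum_(t : M.+1.-tuple 'I_K) G j k t =
  \sum_(t : M.-tuple 'I_K) (word_ok (k :: t) && ((k :: t) != [:: j]))%:R.
Proof.
rewrite sum_tuple_cons (bigD1 k) //= [X in _ + X]big1 ?addr0.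
  by apply: eq_bigr => t _; rewrite G_cons eqxx andbT.
move=> i ik; apply: big1 => t _.
by rewrite G_cons (negbTE ik) andbF.
Qed.

Definition D (M : nat) (k : 'I_K) : R :=
  \sum_(t : M.-tuple 'I_K) (word_ok (k :: t))%:R.

Lemma D_val M k : D M k = (K.-1)%:R ^+ M.
Proof.
elim: M k => [|M IH] k.
  rewrite /D (eq_bigr (fun _ => 1)); last by move=> t _; rewrite tuple0.
  by rewrite sumr_const card_tuple expn0 expr0.
rewrite /D (@sum_tuple_cons _ _ _ (fun s => (word_ok (k :: s))%:R)).
rewrite (eq_bigr (fun i => (k != i)%:R * (K.-1)%:R ^+ M)).
  by rewrite -mulr_suml sum_ind exprS.
move=> i _; rewrite -(IH i) /D mulr_sumr; apply: eq_bigr => t _ /=.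
by case: (k != i); rewrite ?mul1r ?mul0r.
Qed.

Definition cnt j M k : R := \sum_(t : M.-tuple 'I_K) G j k t.

Lemma cnt0 j k : cnt j 0 k = (k == j)%:R.
Proof.
rewrite /cnt (eq_bigr (fun _ => (k == j)%:R)); last first.
  move=> t _; rewrite tuple0 /G /=.
  have [->|kj] := eqVneq k j; first by rewrite center_inside.
  case ik: (inside k (c j)) => //.
  by move: kj; rewrite (inside_uniq (center_inside j) ik) eqxx.
by rewrite sumr_const card_tuple expn0.
Qed.

Lemma cnt1 j k : cnt j 1 k = 1 - (k == j)%:R.
Proof.
rewrite /cnt cnt_succ (eq_bigr (fun _ => 1 - (k == j)%:R)); last first.
  move=> t _; rewrite tuple0 /=.
  have -> : ([:: k] != [:: j]) = (k != j) by rewrite eqseq_cons andbT.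
  by case: (k == j); rewrite ?subrr ?subr0.
by apply: sum_tuple0.
Qed.

Lemma cntSS j k M : cnt j M.+2 k = (K.-1)%:R ^+ M.+1.
Proof.
rewrite /cnt cnt_succ -(D_val M.+1 k); apply: eq_bigr => t _.
case: t => [[|x s] hs] //=.
by rewrite eqseq_cons /= andbF andbT.
Qed.

Lemma circ_psiN j k Gam N :
  circulation (c k) (rad k) (psiN c rad j Gam N) =
  Gam * \sum_(M < N.+1) (-1) ^+ M * cnt j M k.
Proof.
rewrite /circulation /psiN big_flatten big_map.
rewrite (_ : iota 0 N.+1 = index_iota 0 N.+1); last by rewrite /index_iota subn0.
rewrite big_mkord mulr_sumr.
apply: eq_bigr => M _.
rewrite big_map /= /level_pts sum_pmap sum_enum_tuple mulrA.
by [].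
Qed.

Definition S (N : nat) : R := \sum_(M < N) (-1) ^+ M.+1 * (K.-1)%:R ^+ M.

Lemma P_val j k N :
  \sum_(M < N.+2) (-1) ^+ M * cnt j M k = 2 * (k == j)%:R + S N.+1.
Proof.
elim: N => [|N IH].
  rewrite /S !big_ord_recr !big_ord0 /= cnt0 cnt1.
  rewrite expr0 expr1 !mul1r; ring.
rewrite big_ord_recr IH /S [in RHS]big_ord_recr /= cntSS.
by rewrite addrA.
Qed.

Lemma S_val (hK : (2 <= K)%N) N :
  K%:R * S N = (-1) ^+ N * (K.-1)%:R ^+ N - 1.
Proof.
have hx : K%:R = (K.-1)%:R + 1 :> R.
  have hK0 : (0 < K)%N by apply: ltnW.
  by rewrite -{1}(prednK hK0) -addn1 natrD.
elim: N => [|N IH]; first by rewrite /S big_ord0 mulr0 !expr0 mul1r subrr.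
rewrite /S big_ord_recr /= mulrDr -/(S N) IH hx !exprS.
ring.
Qed.

Lemma circ_star (hK : (2 <= K)%N) j k Gam N (hN : (1 <= N)%N) :
  circulation (c k) (rad k) (psiStar c rad j Gam N) =
  Gam * (2 * K%:R * (k == j)%:R - 1) / K%:R.
Proof.
rewrite /psiStar circ_cat !circ_scale !circ_psiN.
case: N hN => [|N] // _.
rewrite !P_val.
rewrite [S N.+2]/S big_ord_recr /= -/(S N.+1).
have hs := S_val hK N.+1.
have hx : K%:R = (K.-1)%:R + 1 :> R.
  have hK0 : (0 < K)%N by apply: ltnW.
  by rewrite -{1}(prednK hK0) -addn1 natrD.
have hK0 : K%:R != 0 :> R.
  by rewrite pnatr_eq0 -lt0n; apply: ltnW.
move: hs; set s := S N.+1; set x := (K.-1)%:R; set d := (k == j)%:R.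
rewrite (exprS _ N.+1) => hs.
have he : (-1) ^+ N.+1 * x ^+ N.+1 = K%:R * s + 1 by rewrite hs subrK.
rewrite mulN1r mulNr he.
rewrite hx in hK0 *.
by field.
Qed.
End Geo.

Theorem mainTheorem8 (R : realFieldType) (K : nat) (hK : (2 <= K)%N)
  (c : 'I_K -> pt R) (rad : 'I_K -> R)
  (hrad : forall k, 0 < rad k)
  (hdisj : forall i k : 'I_K, i != k -> forall z : pt R,
      ~ (sqn (psub z (c i)) <= rad i ^+ 2 /\ sqn (psub z (c k)) <= rad k ^+ 2))
  (j : 'I_K) (Gam : R) (N : nat) (hN : (1 <= N)%N) :
  circulation (c j) (rad j) (psiStar c rad j Gam N) = Gam * (2 * K - 1)%:R / K%:R /\
  (forall k : 'I_K, k != j ->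
     circulation (c k) (rad k) (psiStar c rad j Gam N) = - (Gam / K%:R)).
Proof.
split.
  rewrite (circ_star hrad hdisj hK j j Gam hN) eqxx mulr1.
  rewrite natrB ?natrM //.
  by rewrite muln_gt0 /= (leq_trans _ hK).
move=> k kj.
rewrite (circ_star hrad hdisj hK j k Gam hN) (negbTE kj) mulr0 add0r.
by rewrite mulrN1 mulNr.
Qed.
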